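(* Let $a,a_1\in\mathbb{C}\setminus\{0,1\}$, $a\ne a_1$, and $\alpha,\beta,\gamma\in\mathbb{C}$ with $\gamma$ not a non-positive integer. Take $\varepsilon=-1$, $\varepsilon_1=0$, $\delta=2+\alpha+\beta-\gamma$ (so that $1+\alpha+\beta=\gamma+\delta+\varepsilon+\varepsilon_1$). Let $e_1\in\mathbb{C}$, $e_1\ne 0$ and not a negative integer, satisfy $$a(\alpha-e_1)(\beta-e_1)+(\gamma-1-e_1)e_1=0,$$ and set $$\theta_0=-aa_1\alpha\beta\,\frac{1+e_1}{e_1},\qquad \theta_1=a_1\alpha\beta-\frac{\theta_0}{a_1}.$$ Then $u(z)={}_3F_2(\alpha,\beta,1+e_1;\gamma,e_1;z)$ is a solution of equation (E). Moreover, the accessory parameter $\theta_0$ so defined satisfies $$\frac{\theta_0^2}{a_1^2}+\big(1+a(\alpha+\beta+2\alpha\beta)-\gamma\big)\frac{\theta_0}{a_1}+a\alpha\beta\big(a(1+\alpha)(1+\beta)-\gamma\big)=0.$$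
   Context: Equation (E) is $$\frac{d^2u}{dz^2}+\Big(\frac{\gamma}{z}+\frac{\delta}{z-1}+\frac{\varepsilon}{z-a}+\frac{\varepsilon_1}{z-a_1}\Big)\frac{du}{dz}+\frac{\alpha\beta z^2-\theta_1 z-\theta_0}{z(z-1)(z-a)(z-a_1)}\,u=0 .$$ The generalized hypergeometric series is ${}_rF_s(p_1,\dots,p_r;q_1,\dots,q_s;z)=\sum_{n\ge0}c_nz^n$ with $c_0=1$ and $c_n/c_{n-1}=\frac{1}{n}\prod_{k=1}^r(p_k-1+n)/\prod_{k=1}^s(q_k-1+n)$. *)

(* Defs.v *)
(* Complex numbers are modelled by an arbitrary
   numClosedFieldType (C is one; algC is the instance in the library). *)
From HB Require Import structures.
From mathcomp Require Import all_boot all_order all_algebra.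
Set Implicit Arguments. Unset Strict Implicit. Unset Printing Implicit Defensive.
Import Order.TTheory GRing.Theory Num.Theory.
Local Open Scope ring_scope.

Definition fps (R : Type) := nat -> R.

(* Coefficients of the generalized hypergeometric series
   rF_s(ps; qs; z): c_0 = 1, c_n / c_(n-1) = (1/n) prod (p-1+n) / prod (q-1+n). *)
Fixpoint hyp_coef (R : fieldType) (ps qs : seq R) (n : nat) : R :=
  match n with
  | 0 => 1
  | m.+1 => hyp_coef ps qs m * (\prod_(p <- ps) (p - 1 + (m.+1)%:R))
            / ((m.+1)%:R * \prod_(q <- qs) (q - 1 + (m.+1)%:R))
  end.

Definition hypF (R : fieldType) (ps qs : seq R) : fps R := hyp_coef ps qs.

Definition fps_deriv (R : nzRingType) (f : fps R) : fps R :=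
  fun n => f n.+1 *+ n.+1.

Definition fps_pmul (R : nzRingType) (p : {poly R}) (f : fps R) : fps R :=
  fun n => \sum_(i < n.+1) p`_i * f (n - i)%N.

(* Equation (E), multiplied through by z(z-1)(z-a)(z-a1):
   z(z-1)(z-a)(z-a1) u'' + [g(z-1)(z-a)(z-a1) + d z(z-a)(z-a1)
      + e z(z-1)(z-a1) + e1 z(z-1)(z-a)] u' + (ab z^2 - t1 z - t0) u = 0,
   read as an identity of formal power series at z = 0. *)
Definition solves_E (R : fieldType)
  (gamma delta eps eps1 a a1 alpha beta theta1 theta0 : R) (u : fps R) : Prop :=
  let Z := ('X : {poly R}) in
  let P2 := Z * (Z - 1) * (Z - a%:P) * (Z - a1%:P) in
  let P1 := gamma%:P * (Z - 1) * (Z - a%:P) * (Z - a1%:P)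
          + delta%:P * Z * (Z - a%:P) * (Z - a1%:P)
          + eps%:P * Z * (Z - 1) * (Z - a1%:P)
          + eps1%:P * Z * (Z - 1) * (Z - a%:P) in
  let P0 := (alpha * beta)%:P * Z ^+ 2 - theta1%:P * Z - theta0%:P in
  forall n : nat,
    fps_pmul P2 (fps_deriv (fps_deriv u)) n
    + fps_pmul P1 (fps_deriv u) n + fps_pmul P0 u n = 0.

(* Main.v *)
Require Import Defs.
From HB Require Import structures.
From mathcomp Require Import all_boot all_order all_algebra.
From mathcomp Require Import ring.
Import Order.TTheory GRing.Theory Num.Theory.
Local Open Scope ring_scope.


Lemma pmul5 (R : nzRingType) (p : {poly R}) (f : fps R) n :
  (size p <= 5)%N ->
  fps_pmul p f n = \sum_(i < 5) (if (i <= n)%N then p`_i * f (n - i)%N else 0).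
Proof.
move=> sp; rewrite /fps_pmul.
rewrite (big_ord_widen (n.+1 + 5) (fun i => p`_i * f (n - i)%N)) ?leq_addr //.
rewrite (big_ord_widen (n.+1 + 5) (fun i => if (i <= n)%N then p`_i * f (n - i)%N else 0)) ?leq_addl //.
rewrite [LHS]big_mkcond [RHS]big_mkcond /=; apply: eq_bigr => i _.
rewrite ltnS; case: (ltnP i 5) => hi; case: (leqP i n) => //= _.
by rewrite nth_default ?mul0r // (leq_trans sp).
Qed.

Lemma hcS (R : fieldType) (al be g e : R) m :
  hypF [:: al; be; 1 + e] [:: g; e] m.+1 =
  hypF [:: al; be; 1 + e] [:: g; e] m *
  ((al - 1 + m.+1%:R) * ((be - 1 + m.+1%:R) * ((1 + e - 1 + m.+1%:R) * 1)))
  / (m.+1%:R * ((g - 1 + m.+1%:R) * ((e - 1 + m.+1%:R) * 1))).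
Proof. by rewrite /hypF /= !big_cons !big_nil. Qed.

Lemma hc0 (R : fieldType) (ps qs : seq R) : hypF ps qs 0 = 1.
Proof. by []. Qed.

Lemma pmul5e (R : nzRingType) (p : {poly R}) (f : fps R) n :
  (size p <= 5)%N ->
  fps_pmul p f n =
    (if (0 <= n)%N then p`_0 * f (n - 0)%N else 0) +
    (if (1 <= n)%N then p`_1 * f (n - 1)%N else 0) +
    (if (2 <= n)%N then p`_2 * f (n - 2)%N else 0) +
    (if (3 <= n)%N then p`_3 * f (n - 3)%N else 0) +
    (if (4 <= n)%N then p`_4 * f (n - 4)%N else 0).
Proof.
move=> sp; rewrite pmul5 //.
by rewrite !big_ord_recl big_ord0 addr0 /= !addrA.
Qed.

Lemma fdE (R : nzRingType) (f : fps R) n : fps_deriv f n = f n.+1 * n.+1%:R.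
Proof. by rewrite /fps_deriv mulr_natr. Qed.


Lemma polyE (C : numClosedFieldType) (a a1 g d e e1 t0 t1 ab : C) :
  let Z := ('X : {poly C}) in
  [/\ Z * (Z - 1) * (Z - a%:P) * (Z - a1%:P) =
      Poly [:: 0; - (a * a1); a + a1 + a * a1; - (1 + a + a1); 1],
      g%:P * (Z - 1) * (Z - a%:P) * (Z - a1%:P)
          + d%:P * Z * (Z - a%:P) * (Z - a1%:P)
          + e%:P * Z * (Z - 1) * (Z - a1%:P)
          + e1%:P * Z * (Z - 1) * (Z - a%:P) =
      Poly [:: - (g * a * a1); g * (a + a1 + a * a1) + d * a * a1 + e * a1 + e1 * a;
              - (g * (1 + a + a1) + d * (a + a1) + e * (1 + a1) + e1 * (1 + a));
              g + d + e + e1] &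
      ab%:P * Z ^+ 2 - t1%:P * Z - t0%:P = Poly [:: - t0; - t1; ab]].
Proof.
move=> Z; rewrite /Z /= !cons_poly_def.
rewrite !(polyCD, polyCM, polyCN, polyC1, polyC0).
split; ring.
Qed.


Lemma test (C : numClosedFieldType)
  (a a1 alpha beta gamma e1 : C) (c : fps C)
  (he1 : a * (alpha - e1) * (beta - e1) + (gamma - 1 - e1) * e1 = 0)
  (he10 : e1 != 0) (ha10 : a1 != 0)
  (hgamma : forall k : nat, gamma != - k%:R)
  (he1neg : forall k : nat, e1 != - (k.+1)%:R)
  (hc : forall m, c m.+1 = c m *
  ((alpha - 1 + m.+1%:R) * ((beta - 1 + m.+1%:R) * ((1 + e1 - 1 + m.+1%:R) * 1)))
  / (m.+1%:R * ((gamma - 1 + m.+1%:R) * ((e1 - 1 + m.+1%:R) * 1)))) :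
  let eps := -1 in
  let eps1 := 0 in
  let delta := 2 + alpha + beta - gamma in
  let theta0 := - (a * a1 * alpha * beta) * ((1 + e1) / e1) in
  let theta1 := a1 * alpha * beta - theta0 / a1 in
  solves_E gamma delta eps eps1 a a1 alpha beta theta1 theta0 c.
Proof.
move=> eps eps1 delta theta0 theta1.
have [E2 E1 E0] := polyE _ a a1 gamma delta eps eps1 theta0 theta1 (alpha * beta).
rewrite /solves_E E2 E1 E0 => n.
have hg : gamma = 1 + e1 - a * (alpha - e1) * (beta - e1) / e1.
  apply: (mulIf he10). rewrite mulrBl mulrDl divfK //.
  move/eqP: he1; rewrite addr_eq0 => /eqP ->. ring.
have hk : forall k, (k.+1)%:R != 0 :> C by move=> k; rewrite pnatr_eq0.
have he : forall k, e1 - 1 + (k.+1)%:R != 0.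
  move=> k; rewrite -natr1 (_ : e1 - 1 + (k%:R + 1) = e1 + k%:R); last by ring.
  case: k => [|k]; first by rewrite addr0.
  by rewrite addr_eq0.
have hgk : forall k, (1 + e1) * e1 - a * (alpha - e1) * (beta - e1) + -1 * e1 +
      (k.+1)%:R * e1 != 0.
  move=> k; have -> : (1 + e1) * e1 - a * (alpha - e1) * (beta - e1) + -1 * e1 +
      (k.+1)%:R * e1 = (gamma - 1 + k.+1%:R) * e1 by rewrite hg; field.
  rewrite mulf_neq0 // -natr1 (_ : gamma - 1 + (k%:R + 1) = gamma + k%:R); last by ring.
  rewrite addr_eq0; exact: hgamma.
have hgk0 : (1 + e1) * e1 - a * (alpha - e1) * (beta - e1) + -1 * e1 + e1 != 0.
  by have := hgk 0; rewrite mulr1n mul1r.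
rewrite !pmul5e ?(leq_trans (size_Poly _)) //.
rewrite !coef_Poly !fdE.
case: n => [|[|[|[|m]]]].
all: rewrite ?ltnS ?ltn0 ?leq0n ?subSS ?subn0 /=.
5: rewrite (hc m.+4) (hc m.+3) (hc m.+2).
1-4: rewrite !hc.
all: rewrite /theta1 /theta0 /delta /eps /eps1 -!natr1 hg.
all: field.
all: rewrite ?natr1 ?hk ?he ?hgk ?hgk0 ?ha10 ?he10 //.
Qed.


Theorem mainTheorem2 (C : numClosedFieldType)
  (a a1 alpha beta gamma e1 : C)
  (ha0 : a != 0) (ha1 : a != 1) (ha10 : a1 != 0) (ha11 : a1 != 1)
  (haa1 : a != a1)
  (hgamma : forall k : nat, gamma != - k%:R)
  (he10 : e1 != 0)
  (he1neg : forall k : nat, e1 != - (k.+1)%:R)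
  (he1 : a * (alpha - e1) * (beta - e1) + (gamma - 1 - e1) * e1 = 0) :
  let eps := -1 in
  let eps1 := 0 in
  let delta := 2 + alpha + beta - gamma in
  let theta0 := - (a * a1 * alpha * beta) * ((1 + e1) / e1) in
  let theta1 := a1 * alpha * beta - theta0 / a1 in
  solves_E gamma delta eps eps1 a a1 alpha beta theta1 theta0
    (hypF [:: alpha; beta; 1 + e1] [:: gamma; e1])
  /\
  (theta0 ^+ 2 / a1 ^+ 2
   + (1 + a * (alpha + beta + 2 * alpha * beta) - gamma) * (theta0 / a1)
   + a * alpha * beta * (a * (1 + alpha) * (1 + beta) - gamma) = 0).
Proof.
move=> eps eps1 delta theta0 theta1; split.
  apply: test => //; exact: hcS.
have hg : gamma = 1 + e1 - a * (alpha - e1) * (beta - e1) / e1.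
  apply: (mulIf he10). rewrite mulrBl mulrDl divfK //.
  move/eqP: he1; rewrite addr_eq0 => /eqP ->. ring.
rewrite /theta0 hg; field.
by rewrite he10 ha10.
Qed.
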